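(* Let $K>1$ and let $\kappa=(x_i)_{i\in\mathbb Z}$ and $\eta=(y_i)_{i\in\mathbb Z}$ be independent $K$-contracting axes in a geodesic metric space $X$. Then there exists $K'>0$ such that $\operatorname{diam}\big(x_0\cup\pi_\kappa(\eta)\big)<K'$ and $\operatorname{diam}\big(x_0\cup\pi_{\{x_i\}_{i\ge0}}(\{x_i\}_{i\le0})\big)<K'$.
   Context: $X$ is a geodesic metric space. For $A\subseteq X$, $\pi_A(z)=\{a\in A:d(z,a)=d(z,A)\}$ and $\pi_A(B)=\bigcup_{b\in B}\pi_A(b)$. $A$ is $K$-contracting if $\pi_A(z)\ne\emptyset$ for all $z$ and $d(x,y)\le d(x,A)-K$ implies $\operatorname{diam}(\pi_A(x)\cup\pi_A(y))\le K$. A $K$-contracting axis indexed by $\mathbb Z$ is a sequence $(x_i)_{i\in\mathbb Z}$ with $|i-j|/K-K\le d(x_i,x_j)\le K|i-j|+K$ whose image $\{x_i\}$ is $K$-contracting; projections onto it mean onto its image. Sequences $(x_i),(y_i)$ are independent if for every $M>0$ the set $\{(n,m):d(x_n,y_m)<M\}$ is bounded. *)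

(* Defs.v *)
From Stdlib Require Import Reals ZArith Lra.
From Coquelicot Require Import Coquelicot.
Open Scope R_scope.

Section Metric.
Variable X : Type.
Variable d : X -> X -> R.

Definition is_metric : Prop :=
  (forall x y, 0 <= d x y) /\
  (forall x y, d x y = 0 <-> x = y) /\
  (forall x y, d x y = d y x) /\
  (forall x y z, d x z <= d x y + d y z).

Definition geodesic : Prop :=
  forall x y, exists g : R -> X,
    g 0 = x /\ g (d x y) = y /\
    forall s t, 0 <= s <= d x y -> 0 <= t <= d x y -> d (g s) (g t) = Rabs (s - t).

Definition setdist (z : X) (A : X -> Prop) : R :=
  real (Glb_Rbar (fun r => exists a, A a /\ r = d z a)).

Definition proj (A : X -> Prop) (z : X) : X -> Prop :=
  fun a => A a /\ d z a = setdist z A.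

Definition proj_set (A B : X -> Prop) : X -> Prop :=
  fun a => exists b, B b /\ proj A b a.

Definition diam_le (S : X -> Prop) (K : R) : Prop :=
  forall a b, S a -> S b -> d a b <= K.

Definition diam_lt (S : X -> Prop) (K : R) : Prop :=
  exists B, B < K /\ diam_le S B.

Definition union (S T : X -> Prop) : X -> Prop := fun a => S a \/ T a.

Definition contracting (K : R) (A : X -> Prop) : Prop :=
  (forall z, exists a, proj A z a) /\
  (forall x y, d x y <= setdist x A - K ->
     diam_le (union (proj A x) (proj A y)) K).

Definition image (x : Z -> X) : X -> Prop := fun p => exists i, p = x i.

Definition contracting_axis (K : R) (x : Z -> X) : Prop :=
  (forall i j, Rabs (IZR (i - j)) / K - K <= d (x i) (x j) /\
               d (x i) (x j) <= K * Rabs (IZR (i - j)) + K) /\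
  contracting K (image x).

Definition independent (x y : Z -> X) : Prop :=
  forall M, 0 < M -> exists N : Z,
    forall n m, d (x n) (y m) < M -> (Z.abs n <= N)%Z /\ (Z.abs m <= N)%Z.

End Metric.

Arguments setdist {X} d z A.
Arguments proj {X} d A z.
Arguments proj_set {X} d A B.
Arguments diam_le {X} d S K.
Arguments diam_lt {X} d S K.
Arguments union {X} S T.
Arguments contracting {X} d K A.
Arguments image {X} x.
Arguments contracting_axis {X} d K x.
Arguments independent {X} d x y.

(* Main.v *)
Require Import Defs.
From Stdlib Require Import Reals ZArith Lra Lia.
From Coquelicot Require Import Coquelicot.
Open Scope R_scope.

Lemma arch_nat (r : R) : exists n : nat, r <= INR n.
Proof.
  destruct (archimed r) as [H1 H2].
  exists (Z.to_nat (up r)).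
  destruct (Z_le_gt_dec 0 (up r)) as [Hz|Hz].
  - rewrite INR_IZR_INZ, Z2Nat.id by exact Hz. lra.
  - assert (IZR (up r) <= -1) by (apply IZR_le; lia).
    pose proof (pos_INR (Z.to_nat (up r))). lra.
Qed.

Lemma setdist_le (X : Type) (d : X -> X -> R) (hmet : is_metric X d)
  (A : X -> Prop) z a : A a -> setdist d z A <= d z a.
Proof.
  intro Ha. unfold setdist.
  destruct (Glb_Rbar_correct (fun r => exists a, A a /\ r = d z a)) as [Hlb _].
  specialize (Hlb (d z a) (ex_intro _ a (conj Ha eq_refl))).
  destruct (Glb_Rbar _); simpl in *.
  - exact Hlb.
  - contradiction.
  - destruct hmet as [H0 _]. apply H0.
Qed.

Lemma chain (X : Type) (d : X -> X -> R) (hmet : is_metric X d)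
  (K : R) (hK : 0 < K) (A : X -> Prop) (hA : contracting d K A)
  (g : R -> X) (L : R) (hL : 0 <= L)
  (hg : forall s t, 0 <= s <= L -> 0 <= t <= L -> d (g s) (g t) = Rabs (s - t))
  (hend : A (g L)) :
  forall n : nat, forall t, 0 <= t <= L -> L - t <= INR n * K ->
    3 * K < setdist d (g t) A ->
    exists ts, t <= ts <= L /\ setdist d (g ts) A <= 3 * K /\
      forall r q, proj d A (g t) r -> proj d A (g ts) q ->
        setdist d (g t) A - 3 * K + 2 * d r q <= ts - t.
Proof.
  destruct hmet as [Hpos [Hid [Hsym Htri]]].
  destruct hA as [Hex Hc].
  induction n as [|n IH]; intros t Ht HLt Hf.
  - simpl in HLt. assert (t = L) by lra. subst t.
    pose proof (setdist_le X d (conj Hpos (conj Hid (conj Hsym Htri))) A (g L) (g L) hend).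
    assert (d (g L) (g L) = 0) by (apply Hid; reflexivity). lra.
  - set (f0 := setdist d (g t) A) in *.
    assert (Hda : f0 <= d (g t) (g L)).
    { apply (setdist_le X d (conj Hpos (conj Hid (conj Hsym Htri)))). exact hend. }
    rewrite hg in Hda by lra.
    rewrite Rabs_minus_sym, Rabs_right in Hda by lra.
    set (t1 := t + f0 - K).
    assert (Ht1 : 0 <= t1 <= L) by (unfold t1; lra).
    assert (Hd01 : d (g t) (g t1) = f0 - K).
    { rewrite hg by lra. unfold t1. rewrite Rabs_minus_sym, Rabs_right; lra. }
    assert (Hdiam := Hc (g t) (g t1) ltac:(rewrite Hd01; unfold f0; lra)).
    destruct (Rle_dec (setdist d (g t1) A) (3 * K)) as [Hle|Hgt].
    + exists t1. split; [unfold t1; lra|]. split; [exact Hle|].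
      intros r q Hr Hq.
      assert (d r q <= K) by (apply Hdiam; [left|right]; assumption).
      fold f0. unfold t1. lra.
    + rewrite S_INR in HLt.
      rewrite Rmult_plus_distr_r, Rmult_1_l in HLt.
      destruct (IH t1 Ht1 ltac:(unfold t1; lra) ltac:(lra)) as [ts [Hts [Hfs Hineq]]].
      exists ts. split; [unfold t1 in Hts; lra|]. split; [exact Hfs|].
      intros r q Hr Hq.
      destruct (Hex (g t1)) as [r1 Hr1].
      specialize (Hineq r1 q Hr1 Hq).
      assert (d r r1 <= K) by (apply Hdiam; [left|right]; assumption).
      pose proof (Htri r r1 q).
      apply Rnot_le_lt in Hgt. unfold t1 in *. lra.
Qed.

Lemma L2 (X : Type) (d : X -> X -> R) (hmet : is_metric X d)
  (K : R) (hK : 0 < K) (A : X -> Prop) (hA : contracting d K A)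
  (g : R -> X) (L : R) (hL : 0 <= L)
  (hg : forall s t, 0 <= s <= L -> 0 <= t <= L -> d (g s) (g t) = Rabs (s - t))
  (hend : A (g L)) :
  exists ts, 0 <= ts <= L /\ setdist d (g ts) A <= 3 * K /\
    setdist d (g 0) A - 3 * K <= ts /\ ts <= setdist d (g 0) A + 9 * K /\
    forall p q, proj d A (g 0) p -> proj d A (g ts) q -> d p q <= 6 * K.
Proof.
  pose proof hmet as hmet'.
  destruct hmet' as [Hpos [Hid [Hsym Htri]]].
  pose proof hA as [Hex Hc].
  destruct (Hex (g 0)) as [p0 [Hp0A Hp0]].
  pose proof (Hpos (g 0) p0) as Hf0.
  destruct (Rle_dec (setdist d (g 0) A) (3 * K)) as [Hle|Hgt].
  - exists 0. split; [lra|]. split; [exact Hle|]. split; [lra|]. split; [lra|].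
    intros p q [_ Hp] [_ Hq].
    pose proof (Htri p (g 0) q). rewrite Hsym in Hp. lra.
  - apply Rnot_le_lt in Hgt.
    destruct (arch_nat (L / K)) as [n Hn].
    assert (HnK : L - 0 <= INR n * K).
    { apply (Rmult_le_compat_r K) in Hn; [|lra].
      unfold Rdiv in Hn. rewrite Rmult_assoc, Rinv_l, Rmult_1_r in Hn; lra. }
    destruct (chain X d hmet K hK A hA g L hL hg hend n 0 ltac:(lra) HnK Hgt)
      as [ts [Hts [Hfs Hineq]]].
    destruct (Hex (g ts)) as [q0 Hq0].
    assert (Hup : forall p q, proj d A (g 0) p -> proj d A (g ts) q ->
               ts <= setdist d (g 0) A + d p q + 3 * K).
    { intros p q [HpA Hp] [HqA Hq].
      pose proof (Htri (g 0) p (g L)).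
      pose proof (Htri p q (g L)).
      pose proof (Htri q (g ts) (g L)).
      assert (e1 : d (g 0) (g L) = L).
      { rewrite hg by lra. replace (0 - L) with (- L) by ring.
        rewrite Rabs_Ropp, Rabs_right; lra. }
      assert (e2 : d (g ts) (g L) = L - ts).
      { rewrite hg by lra. rewrite Rabs_minus_sym, Rabs_right; lra. }
      pose proof (Hsym q (g ts)). lra. }
    assert (Hb : forall p q, proj d A (g 0) p -> proj d A (g ts) q -> d p q <= 6 * K).
    { intros p q Hp Hq. specialize (Hineq p q Hp Hq). specialize (Hup p q Hp Hq). lra. }
    exists ts. split; [lra|]. split; [exact Hfs|].
    specialize (Hineq p0 q0 (conj Hp0A Hp0) Hq0).
    pose proof (Hb p0 q0 (conj Hp0A Hp0) Hq0).
    pose proof (Hpos p0 q0).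
    split; [lra|]. split; [|exact Hb].
    specialize (Hup p0 q0 (conj Hp0A Hp0) Hq0). lra.
Qed.

Lemma L1 (X : Type) (d : X -> X -> R) (hmet : is_metric X d) (hgeo : geodesic X d)
  (K : R) (hK : 0 < K) (A : X -> Prop) (hA : contracting d K A)
  z a p : A a -> proj d A z p -> setdist d z A + d p a - 12 * K <= d z a.
Proof.
  intros Ha Hp.
  pose proof hmet as [Hpos [Hid [Hsym Htri]]].
  destruct (hgeo z a) as [g [hg0 [hgL hg]]].
  pose proof (Hpos z a).
  rewrite <- hgL in Ha.
  destruct (L2 X d hmet K hK A hA g (d z a) ltac:(lra) hg Ha)
    as [ts [Hts [Hfs [Hlo [Hhi Hb]]]]].
  rewrite hg0 in *.
  destruct hA as [Hex _].
  destruct (Hex (g ts)) as [q Hq].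
  specialize (Hb p q Hp Hq).
  destruct Hq as [_ Hq].
  pose proof (Htri p q (g (d z a))).
  pose proof (Htri q (g ts) (g (d z a))).
  assert (e2 : d (g ts) (g (d z a)) = d z a - ts).
  { rewrite hg by lra. rewrite Rabs_minus_sym, Rabs_right; lra. }
  pose proof (Hsym q (g ts)). rewrite hgL in *. lra.
Qed.

Lemma morse (X : Type) (d : X -> X -> R) (hmet : is_metric X d) (hgeo : geodesic X d)
  (K : R) (hK : 0 < K) (A : X -> Prop) (hA : contracting d K A)
  (g : R -> X) (L : R) (hL : 0 <= L)
  (hg : forall s t, 0 <= s <= L -> 0 <= t <= L -> d (g s) (g t) = Rabs (s - t))
  b1 b2 c1 c2 : A b1 -> A b2 -> d (g 0) b1 <= c1 -> d (g L) b2 <= c2 ->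
  forall t, 0 <= t <= L -> setdist d (g t) A <= c1 + c2 + 12 * K.
Proof.
  intros Hb1 Hb2 H1 H2 t Ht.
  pose proof hmet as [Hpos [Hid [Hsym Htri]]].
  pose proof hA as [Hex _].
  destruct (Hex (g t)) as [r Hr].
  pose proof (L1 X d hmet hgeo K hK A hA (g t) b1 r Hb1 Hr).
  pose proof (L1 X d hmet hgeo K hK A hA (g t) b2 r Hb2 Hr).
  pose proof (Htri (g t) (g 0) b1).
  pose proof (Htri (g t) (g L) b2).
  pose proof (Htri (g 0) b1 (g L)).
  pose proof (Htri b1 b2 (g L)).
  pose proof (Htri b1 r b2).
  pose proof (Hsym b1 r).
  pose proof (Hsym b2 (g L)).
  pose proof (Hsym (g t) (g 0)).
  assert (e1 : d (g 0) (g L) = L).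
  { rewrite hg by lra. replace (0 - L) with (- L) by ring.
    rewrite Rabs_Ropp, Rabs_right; lra. }
  assert (e2 : d (g t) (g L) = L - t).
  { rewrite hg by lra. rewrite Rabs_minus_sym, Rabs_right; lra. }
  assert (e3 : d (g 0) (g t) = t).
  { rewrite hg by lra. rewrite Rabs_minus_sym, Rabs_right; lra. }
  lra.
Qed.

Lemma qi_bound (a D K : R) : 0 < K -> a / K - K <= D -> a <= K * (D + K).
Proof.
  intros HK H.
  replace a with (K * (a / K)) by (field; lra).
  apply Rmult_le_compat_l; lra.
Qed.

Lemma partA (X : Type) (d : X -> X -> R)
  (hmet : is_metric X d) (hgeo : geodesic X d)
  (K : R) (hK : 1 < K) (x y : Z -> X)
  (hx : contracting_axis d K x) (hy : contracting_axis d K y)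
  (hind : independent d x y) :
  exists B, 0 <= B /\ forall p, proj_set d (image x) (image y) p -> d p (x 0%Z) <= B.
Proof.
  pose proof hmet as [Hpos [Hid [Hsym Htri]]].
  destruct hx as [hxq hxc]. destruct hy as [_ hyc].
  assert (hK0 : 0 < K) by lra.
  destruct (hind (18 * K + 1) ltac:(lra)) as [N HN].
  set (G0 := d (x 0%Z) (y 0%Z)).
  assert (HG0 : 0 <= G0) by apply Hpos.
  assert (HRN : 0 <= K * Rabs (IZR N)) by (apply Rmult_le_pos; [lra|apply Rabs_pos]).
  exists (G0 + 37 * K + K * Rabs (IZR N)). split; [lra|].
  intros p [b [[m Hbm] Hp]]. subst b.
  set (L := d (y m) (x 0%Z)).
  assert (HL : 0 <= L) by apply Hpos.
  destruct (hgeo (y m) (x 0%Z)) as [s [hs0 [hsL hs]]]. fold L in hsL, hs.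
  assert (hendx : image x (s L)) by (rewrite hsL; exists 0%Z; reflexivity).
  destruct (L2 X d hmet K hK0 (image x) hxc s L HL hs hendx)
    as [ts1 [Hts1 [Hf1 [_ [Hhi1 Hb1]]]]].
  rewrite hs0 in Hhi1, Hb1.
  set (tau := fun u => s (L - u)).
  assert (htau : forall u v, 0 <= u <= L -> 0 <= v <= L -> d (tau u) (tau v) = Rabs (u - v)).
  { intros u v Hu Hv. unfold tau. rewrite hs by lra.
    replace (L - u - (L - v)) with (-(u - v)) by ring. apply Rabs_Ropp. }
  assert (hendy : image y (tau L)).
  { unfold tau. replace (L - L) with 0 by ring. rewrite hs0. exists m. reflexivity. }
  destruct (L2 X d hmet K hK0 (image y) hyc tau L HL htau hendy)
    as [ts2 [Hts2 [Hf2 [_ [Hhi2 _]]]]].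
  assert (Htau0 : tau 0 = x 0%Z) by (unfold tau; replace (L - 0) with L by ring; exact hsL).
  rewrite Htau0 in Hhi2.
  assert (Hg0 : setdist d (x 0%Z) (image y) <= G0)
    by (apply setdist_le; [exact hmet| exists 0%Z; reflexivity]).
  assert (HL1 := L1 X d hmet hgeo K hK0 (image x) hxc (y m) (x 0%Z) p
                  ltac:(exists 0%Z; reflexivity) Hp).
  fold L in HL1.
  destruct (Rle_dec (d p (x 0%Z)) (G0 + 30 * K)) as [Hsmall|Hbig]; [lra|].
  apply Rnot_le_lt in Hbig.
  set (L' := L - ts2).
  assert (hs' : forall u v, 0 <= u <= L' -> 0 <= v <= L' -> d (s u) (s v) = Rabs (u - v)).
  { intros u v Hu Hv. apply hs; unfold L' in *; lra. }
  destruct (proj1 hyc (tau ts2)) as [b2 [Hb2A Hb2]].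
  assert (Hm := morse X d hmet hgeo K hK0 (image y) hyc s L' ltac:(unfold L'; lra) hs'
            (y m) b2 0 (3 * K) ltac:(exists m; reflexivity) Hb2A
            ltac:(rewrite hs0; rewrite (proj2 (Hid (y m) (y m)) eq_refl); lra)
            ltac:(unfold L'; fold (tau ts2); lra)).
  assert (Hts1' : 0 <= ts1 <= L') by (unfold L'; lra).
  specialize (Hm ts1 Hts1').
  destruct (proj1 hyc (s ts1)) as [b' [[j Hj] Hb']]. subst b'.
  destruct (proj1 hxc (s ts1)) as [q [[l Hl] Hq]]. subst q.
  pose proof (Hb1 p (x l) Hp (conj (ex_intro _ l eq_refl) Hq)) as Hpq.
  assert (Hlj : d (x l) (y j) < 18 * K + 1).
  { pose proof (Htri (x l) (s ts1) (y j)). rewrite (Hsym (x l) (s ts1)) in H. lra. }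
  destruct (HN l j Hlj) as [Hl _].
  pose proof (proj2 (hxq l 0%Z)) as Hl0.
  replace (l - 0)%Z with l in Hl0 by ring.
  assert (Habs : Rabs (IZR l) <= Rabs (IZR N)).
  { rewrite <- abs_IZR. apply IZR_le in Hl. pose proof (Rle_abs (IZR N)). lra. }
  assert (K * Rabs (IZR l) <= K * Rabs (IZR N)) by (apply Rmult_le_compat_l; lra).
  pose proof (Htri p (x l) (x 0%Z)). lra.
Qed.

Lemma ivt (P : nat -> Z -> Prop) (N : nat) (i j : Z) (J : R) :
  0 <= J -> (i <= 0)%Z -> (0 <= j)%Z -> P 0%nat i -> P N j ->
  (forall n, (n <= N)%nat -> exists k, P n k) ->
  (forall n k k', P n k -> P n k' -> IZR k' <= IZR k + J) ->
  (forall n k k', P n k -> P (S n) k' -> IZR k' <= IZR k + J) ->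
  exists n k, P n k /\ Rabs (IZR k) <= J.
Proof.
  intros HJ Hi Hj P0 PN Hex Hsame Hnext.
  assert (Claim : forall n, (n <= N)%nat ->
            (exists k, P n k /\ (k < 0)%Z) \/ exists n' k, P n' k /\ Rabs (IZR k) <= J).
  { induction n as [|n IH]; intros Hn.
    - destruct (Z_lt_le_dec i 0) as [Hlt|Hge].
      + left. exists i. split; assumption.
      + right. exists 0%nat, i. split; [exact P0|].
        assert (i = 0%Z) by lia. subst i. rewrite Rabs_R0. exact HJ.
    - destruct (IH ltac:(lia)) as [[k [Pk Hk]]|R]; [|right; exact R].
      destruct (Hex (S n) Hn) as [k' Pk'].
      destruct (Z_lt_le_dec k' 0) as [Hlt|Hge].
      + left. exists k'. split; assumption.
      + right. exists (S n), k'. split; [exact Pk'|].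
        pose proof (Hnext n k k' Pk Pk').
        assert (IZR k <= -1) by (apply IZR_le; lia).
        assert (0 <= IZR k') by (apply IZR_le; lia).
        rewrite Rabs_right; lra. }
  destruct (Claim N (Nat.le_refl N)) as [[k [Pk Hk]]|R]; [|exact R].
  exists N, j. split; [exact PN|].
  pose proof (Hsame N k j Pk PN).
  assert (IZR k <= -1) by (apply IZR_le; lia).
  assert (0 <= IZR j) by (apply IZR_le; lia).
  rewrite Rabs_right; lra.
Qed.

Lemma rmin_step (a L : R) : Rabs (Rmin a L - Rmin (a + 1) L) <= 1.
Proof.
  unfold Rmin. destruct (Rle_dec a L); destruct (Rle_dec (a + 1) L);
  apply Rabs_le; lra.
Qed.

Lemma partB (X : Type) (d : X -> X -> R)
  (hmet : is_metric X d) (hgeo : geodesic X d)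
  (K : R) (hK : 1 < K) (x : Z -> X)
  (hx : contracting_axis d K x) :
  exists B, 0 <= B /\ forall p,
    proj_set d (fun p => exists i, (0 <= i)%Z /\ p = x i)
               (fun p => exists i, (i <= 0)%Z /\ p = x i) p -> d p (x 0%Z) <= B.
Proof.
  pose proof hmet as [Hpos [Hid [Hsym Htri]]].
  destruct hx as [hxq hxc].
  assert (hK0 : 0 < K) by lra.
  set (J := K * (24 * K + 1 + K)).
  assert (HJ : 0 <= J) by (unfold J; nra).
  exists (2 * (K * J + K) + 24 * K). split; [nra|].
  intros p [b [[i [Hi Hb]] [[j [Hj Hp]] Hpd]]]. subst b p.
  assert (Hle0 : d (x i) (x j) <= d (x i) (x 0%Z)).
  { rewrite Hpd. apply setdist_le; [exact hmet|]. exists 0%Z. split; [lia|reflexivity]. }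
  set (L := d (x i) (x j)).
  assert (HL : 0 <= L) by apply Hpos.
  destruct (hgeo (x i) (x j)) as [s [hs0 [hsL hs]]]. fold L in hsL, hs.
  assert (Hm := morse X d hmet hgeo K hK0 (image x) hxc s L HL hs (x i) (x j) 0 0
            ltac:(exists i; reflexivity) ltac:(exists j; reflexivity)
            ltac:(rewrite hs0; rewrite (proj2 (Hid (x i) (x i)) eq_refl); lra)
            ltac:(rewrite hsL; rewrite (proj2 (Hid (x j) (x j)) eq_refl); lra)).
  destruct (arch_nat L) as [N HN].
  set (u := fun n : nat => s (Rmin (INR n) L)).
  assert (Hmin : forall n, 0 <= Rmin (INR n) L <= L).
  { intro n. split; [apply Rmin_glb; [apply pos_INR|exact HL]|apply Rmin_r]. }
  set (P := fun n k => d (u n) (x k) <= 12 * K).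
  assert (Hjump : forall n n' k k', P n k -> P n' k' -> d (u n) (u n') <= 1 ->
             IZR k' <= IZR k + J).
  { intros n n' k k' Hk Hk' Hnn.
    unfold P in *.
    pose proof (Htri (x k) (u n) (x k')).
    pose proof (Htri (u n) (u n') (x k')).
    pose proof (Hsym (x k) (u n)).
    pose proof (proj1 (hxq k k')) as Hq.
    assert (Rabs (IZR (k - k')) <= J) by (unfold J; apply qi_bound; lra).
    rewrite minus_IZR in H2.
    pose proof (Rle_abs (- (IZR k - IZR k'))). rewrite Rabs_Ropp in H3. lra. }
  destruct (ivt P N i j J HJ Hi Hj) as [n [k [Pk Hk]]].
  - unfold P, u. rewrite Rmin_left by (simpl; lra). simpl. rewrite hs0.
    rewrite (proj2 (Hid (x i) (x i)) eq_refl). lra.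
  - unfold P, u. rewrite Rmin_right by lra. rewrite hsL.
    rewrite (proj2 (Hid (x j) (x j)) eq_refl). lra.
  - intros n _. destruct (proj1 hxc (u n)) as [q [[k Hk] Hq]]. subst q.
    exists k. unfold P. rewrite Hq. unfold u. pose proof (Hm _ (Hmin n)). lra.
  - intros n k k' Hk Hk'. apply (Hjump n n k k' Hk Hk').
    rewrite (proj2 (Hid (u n) (u n)) eq_refl). lra.
  - intros n k k' Hk Hk'. apply (Hjump n (S n) k k' Hk Hk').
    unfold u. rewrite hs by apply Hmin. rewrite S_INR. apply rmin_step.
  - unfold P, u in Pk.
    set (t := Rmin (INR n) L) in *.
    assert (Ht := Hmin n). fold t in Ht.
    assert (e1 : d (x i) (s t) = t).
    { rewrite <- hs0. rewrite hs by lra. rewrite Rabs_minus_sym, Rabs_right; lra. }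
    assert (e2 : d (s t) (x j) = L - t).
    { rewrite <- hsL. rewrite hs by lra. rewrite Rabs_minus_sym, Rabs_right; lra. }
    pose proof (Htri (x i) (s t) (x k)).
    pose proof (Htri (x k) (s t) (x j)).
    pose proof (Hsym (x k) (s t)).
    pose proof (Htri (x i) (x k) (x 0%Z)).
    pose proof (Htri (x j) (x k) (x 0%Z)).
    pose proof (Hsym (x j) (x k)).
    pose proof (proj2 (hxq k 0%Z)) as Hk0.
    replace (k - 0)%Z with k in Hk0 by ring.
    assert (K * Rabs (IZR k) <= K * J) by (apply Rmult_le_compat_l; lra).
    pose proof (Htri (x i) (x k) (s t)). fold L in Hle0. lra.
Qed.

Lemma diam_union (X : Type) (d : X -> X -> R) (hmet : is_metric X d)
  (c : X) (S : X -> Prop) (B B' : R) : 0 <= B -> 2 * B <= B' ->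
  (forall p, S p -> d p c <= B) -> diam_le d (union (fun p => p = c) S) B'.
Proof.
  intros HB HB' H a b Ha Hb.
  pose proof hmet as [Hpos [Hid [Hsym Htri]]].
  assert (Hc : forall z, union (fun p => p = c) S z -> d z c <= B).
  { intros z [Hz|Hz]; [subst z; rewrite (proj2 (Hid c c) eq_refl); exact HB|auto]. }
  pose proof (Hc a Ha). pose proof (Hc b Hb).
  pose proof (Htri a c b). rewrite (Hsym c b) in H2. lra.
Qed.

Theorem lemma3p9 (X : Type) (d : X -> X -> R)
  (hmet : is_metric X d) (hgeo : geodesic X d)
  (K : R) (hK : 1 < K) (x y : Z -> X)
  (hx : contracting_axis d K x) (hy : contracting_axis d K y)
  (hind : independent d x y) :
  exists K' : R, 0 < K' /\
    diam_lt d (union (fun p => p = x 0%Z) (proj_set d (image x) (image y))) K' /\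
    diam_lt d (union (fun p => p = x 0%Z)
                 (proj_set d (fun p => exists i, (0 <= i)%Z /\ p = x i)
                             (fun p => exists i, (i <= 0)%Z /\ p = x i))) K'.
Proof.
  destruct (partA X d hmet hgeo K hK x y hx hy hind) as [B1 [HB1 H1]].
  destruct (partB X d hmet hgeo K hK x hx) as [B2 [HB2 H2]].
  exists (2 * (B1 + B2) + 1). split; [lra|]. split.
  - exists (2 * (B1 + B2)). split; [lra|].
    apply (diam_union X d hmet _ _ B1); [exact HB1|lra|exact H1].
  - exists (2 * (B1 + B2)). split; [lra|].
    apply (diam_union X d hmet _ _ B2); [exact HB2|lra|exact H2].
Qed.
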